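(* For every integer $n \geq 1$, $n$ divides $D_n$.
   Context: A linear arrangement of $\{1,\ldots,n\}$ is a sequence $a_1\cdots a_n$ in which each of $1,\ldots,n$ appears exactly once. It contains the pattern $ij$ if $a_t=i$ and $a_{t+1}=j$ for some $t$; otherwise it avoids it. $D_n$ is the number of linear arrangements of $\{1,\ldots,n\}$ avoiding all of the patterns $12, 23, \ldots, (n-1)n, n1$. *)

(* Defs.v *)
From mathcomp Require Import all_boot.
Set Implicit Arguments. Unset Strict Implicit. Unset Printing Implicit Defensive.

Definition arrangement (n : nat) (s : seq nat) : bool := perm_eq s (iota 1 n).

Definition contains_pattern (s : seq nat) (i j : nat) : bool :=
  has (fun t => (nth 0 s t == i) && (nth 0 s t.+1 == j)) (iota 0 (size s).-1).

Definition avoids_cyclic (n : nat) (s : seq nat) : bool :=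
  all (fun k => ~~ contains_pattern s k k.+1) (iota 1 n.-1)
  && ~~ contains_pattern s n 1.

Definition D (n : nat) : nat :=
  count (fun s => arrangement n s && avoids_cyclic n s) (permutations (iota 1 n)).
(* permutations (iota 1 n) is a duplicate-free list of exactly the arrangements
   (mem_permutations, permutations_uniq), so D n is their number. *)

(* Main.v *)
Require Import Defs.
From mathcomp Require Import all_boot.
From mathcomp Require Import zify.

Definition sg n x := if x < n then x.+1 else 1.
Definition sgi n x := if 1 < x then x.-1 else n.

Lemma sgK {n x} : 0 < x <= n -> sgi n (sg n x) = x.
Proof. move=> /andP[h1 h2]; rewrite /sg /sgi; case: ifP; case: ifP; lia. Qed.

Lemma sg_range {n x} : 0 < x <= n -> 0 < sg n x <= n.
Proof. move=> /andP[h1 h2]; rewrite /sg; case: ifP; lia. Qed.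

Lemma sg_inj {n a b} : 0 < a <= n -> 0 < b <= n -> (sg n a == sg n b) = (a == b).
Proof.
move=> ha hb; apply/eqP/eqP => [E|->//].
by rewrite -(sgK ha) -(sgK hb) E.
Qed.

Definition inr n (s : seq nat) := all (fun x => 0 < x <= n) s.

Lemma perm_inr {n s} : perm_eq s (iota 1 n) -> inr n s.
Proof. move=> H; apply/allP => x; rewrite (perm_mem H) mem_iota; lia. Qed.

Definition good n s :=
  all (fun t => nth 0 s t.+1 != sg n (nth 0 s t)) (iota 0 (size s).-1).

Lemma avoid_good n s : inr n s -> avoids_cyclic n s = good n s.
Proof.
move=> /allP R; rewrite /avoids_cyclic /good /contains_pattern.
have Rt : forall t : nat, t \in iota 0 (size s).-1 ->
   (0 < nth 0 s t <= n) && (0 < nth 0 s t.+1 <= n).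
  move=> t; rewrite mem_iota => Ht; rewrite !R // mem_nth //; move: Ht; case: (size s) => [|m] /=; lia.
apply/idP/idP.
- case/andP => H1 H2; apply/allP => t tI.
  have /andP[/andP[a1 a2] /andP[b1 b2]] := Rt t tI.
  rewrite /sg; case: ltnP => ha.
  + apply/negP => /eqP E.
    move/allP: H1 => /(_ (nth 0 s t)); rewrite mem_iota.
    have -> : (1 <= nth 0 s t < 1 + n.-1) by lia.
    move=> /(_ isT) /hasP; apply; exists t => //; by rewrite E !eqxx.
  + apply/negP => /eqP E; move/hasP: H2; apply; exists t => //.
    have -> : nth 0 s t = n by lia.
    by rewrite E !eqxx.
- move/allP => G; apply/andP; split.
  + apply/allP => k; rewrite mem_iota => kI; apply/hasPn => t tI.
    have := G t tI; apply: contra => /andP[/eqP e1 /eqP e2].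
    rewrite e1 e2 /sg.
    have -> : k < n by lia.
    done.
  + apply/hasPn => t tI; have := G t tI; apply: contra => /andP[/eqP e1 /eqP e2].
    by rewrite e1 e2 /sg ltnn.
Qed.

Lemma good_map n s : inr n s -> good n (map (sg n) s) = good n s.
Proof.
move=> /allP R; rewrite /good size_map; apply: eq_in_all => t.
rewrite mem_iota => Ht.
have h1 : t < size s by lia.
have h2 : t.+1 < size s by lia.
have r1 := R _ (mem_nth 0 h1).
have r2 := R _ (mem_nth 0 h2).
by rewrite (nth_map 0 _ _ h1) (nth_map 0 _ _ h2) sg_inj // sg_range.
Qed.

Lemma inr_map {n s} : inr n s -> inr n (map (sg n) s).
Proof. move=> /allP R; rewrite /inr all_map; apply/allP => x xs /=; exact: sg_range (R x xs). Qed.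

Lemma map_sgK {n s} : inr n s -> map (sgi n) (map (sg n) s) = s.
Proof. move=> /allP R; rewrite -map_comp; apply: map_id_in => x xs /=; exact: sgK (R x xs). Qed.

Lemma perm_sub (T : eqType) (a b : seq T) :
  uniq a -> uniq b -> {subset a <= b} -> size b <= size a -> perm_eq a b.
Proof. move=> ua ub sab sz; apply: uniq_perm => //; exact: (uniq_min_size ua sab sz).2. Qed.

Lemma perm_map_sg n s : perm_eq s (iota 1 n) -> perm_eq (map (sg n) s) (iota 1 n).
Proof.
move=> H; have Hr := perm_inr H.
apply: perm_sub.
- rewrite map_inj_in_uniq ?(perm_uniq H) ?iota_uniq //.
  move=> x y xs ys E; move/allP: Hr => Hr; apply/eqP.
  by rewrite -(sg_inj (Hr x xs) (Hr y ys)) E.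
- exact: iota_uniq.
- move=> x xm; move/allP: (inr_map Hr) => /(_ x xm); rewrite mem_iota; lia.
- by rewrite size_map (perm_size H).
Qed.

Lemma size_sum (L : seq (seq nat)) r : uniq r -> (forall s, s \in L -> head 0 s \in r) ->
  size L = \sum_(k <- r) count (fun s => head 0 s == k) L.
Proof.
move=> ur; elim: L => [|x L IH] H /=.
  by rewrite big1_seq.
rewrite big_split /= -IH; last by move=> s sL; apply: H; rewrite inE sL orbT.
have -> : \sum_(i <- r) (head 0 x == i) = 1; last by rewrite add1n.
rewrite (eq_bigr (fun i => if head 0 x == i then 1 else 0)); last by move=> i _; case: eqP.
rewrite -big_mkcond sum1_count.
have -> : count (fun i => head 0 x == i) r = count_mem (head 0 x) r.
  by apply: eq_count => i /=; rewrite eq_sym.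
by rewrite count_uniq_mem // H // mem_head.
Qed.

Theorem corollary3p4 (n : nat) : 1 <= n -> n %| D n.
Proof.
move=> n1.
set Q := fun s => arrangement n s && avoids_cyclic n s.
rewrite /D -size_filter.
set L := filter _ _.
have memL : forall s, (s \in L) = Q s.
  move=> s; rewrite mem_filter mem_permutations /Q /arrangement.
  by case: (perm_eq s _); rewrite ?andbF ?andbT.
have uL : uniq L by rewrite filter_uniq // permutations_uniq.
have QF : forall s, Q s -> Q (map (sg n) s).
  move=> s /andP[A B]; have Hr := perm_inr A; apply/andP; split.
    exact: perm_map_sg.
  by rewrite avoid_good ?inr_map // good_map // -avoid_good.
have pL : perm_eq (map (map (sg n)) L) L.
  apply: perm_sub => //.
  - rewrite map_inj_in_uniq // => s1 s2; rewrite !memL => /andP[A1 _] /andP[A2 _] E.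
    by rewrite -(map_sgK (perm_inr A1)) -(map_sgK (perm_inr A2)) E.
  - by move=> s /mapP[s' s'L ->]; rewrite memL QF // -memL.
  - by rewrite size_map.
pose c k := count (fun s => head 0 s == k) L.
have cS : forall k, 0 < k < n -> c k.+1 = c k.
  move=> k hk; rewrite /c -((permP pL) (fun s => head 0 s == k.+1)) count_map; apply: eq_in_count => s.
  rewrite memL => /andP[A _]; have /allP Hr := perm_inr A.
  case: s A Hr => [|x s] A Hr.
    by move: (perm_size A); rewrite size_iota /=; lia.
  rewrite /=.
  have -> : k.+1 = sg n k by rewrite /sg; case: ifP; lia.
  rewrite sg_inj //; first (apply: Hr; exact: mem_head); lia.
have call : forall k, 0 < k <= n -> c k = c 1.
  elim => [|k IH] hk; first lia.
  case: k IH hk => [|k] IH hk; first done.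
  rewrite cS; last lia.
  apply: IH; lia.
have -> : size L = \sum_(k <- iota 1 n) c k.
  apply: size_sum; first exact: iota_uniq.
  move=> s; rewrite memL => /andP[A _]; have /allP Hr := perm_inr A.
  case: s A Hr => [|x s] A Hr.
    by move: (perm_size A); rewrite size_iota /=; lia.
  rewrite /= mem_iota; have := Hr x (mem_head _ _); lia.
rewrite (eq_big_seq (fun _ => c 1)); last first.
  by move=> k; rewrite mem_iota => hk; apply: call; lia.
by rewrite big_const_seq count_predT size_iota iter_addn_0 dvdn_mull.
Qed.
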